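(* For all integers $\ell\ge 2$, $k\ge 1$, $n\ge 1$: (a) $f_\ell(n,k)\le \frac{n}{k}\,f_{\ell-1}(n,k)$; (b) if $\ell$ is even, then $f_\ell(n,k)\le 1+k\ell\,(f_{\ell-1}(n,k)-1)\le k\ell\, f_{\ell-1}(n,k)$.
   Context: $f_\ell(n,k)$ is the maximum size of a family $\mathcal S$ of subsets of $A_1\cup\dots\cup A_\ell$, where $A_1,\dots,A_\ell$ are pairwise disjoint $n$-element sets, with $|S\cap A_i|=k$ for all $S\in\mathcal S$ and all $i$, such that for distinct $S,T\in\mathcal S$ the number of indices $i$ with $S\cap T\cap A_i=\emptyset$ is odd. (Equivalently, the clique number of the $\ell$-th xor-power of the Kneser graph $KG(n,k)$.) *)

(* Defs.v *)
From HB Require Import structures.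
From mathcomp Require Import all_boot all_order all_algebra.
Set Implicit Arguments. Unset Strict Implicit. Unset Printing Implicit Defensive.

(* Ground set: A_1 ∪ ... ∪ A_l realised as 'I_l * 'I_n, with
   A_i = {i} x 'I_n (pairwise disjoint, each of size n). *)
Definition block (l n : nat) (i : 'I_l) : {set 'I_l * 'I_n} :=
  [set x | x.1 == i].

Definition balanced (l n k : nat) (S : {set 'I_l * 'I_n}) : bool :=
  [forall i : 'I_l, #|S :&: block n i| == k].

Definition ndisj (l n : nat) (S T : {set 'I_l * 'I_n}) : nat :=
  #|[set i : 'I_l | S :&: T :&: block n i == set0]|.

Definition good_family (l n k : nat) (F : {set {set 'I_l * 'I_n}}) : bool :=
  [forall S in F, balanced k S] &&
  [forall S in F, forall T in F, (S != T) ==> odd (ndisj S T)].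

Definition f (l n k : nat) : nat :=
  \max_(F : {set {set 'I_l * 'I_n}} | good_family k F) #|F|.

(* Main.v *)
Require Import Defs.
From HB Require Import structures.
From mathcomp Require Import all_boot all_order all_algebra.
From mathcomp Require Import lra.
Import Order.TTheory GRing.Theory Num.Theory.
Set Implicit Arguments. Unset Strict Implicit. Unset Printing Implicit Defensive.

Lemma card_slice l n (A : {set 'I_l * 'I_n}) j :
  #|A :&: block n j| = #|[set x | (j,x) \in A]|.
Proof.
have inj : injective (fun x : 'I_n => (j, x)) by move=> a b [].
rewrite -(card_imset _ inj); apply: eq_card => -[a b].
rewrite !inE /=. apply/andP/imsetP.
- by case=> Hy /eqP E; subst a; exists b; rewrite ?inE.
- by case=> c; rewrite inE => Hc [-> ->]; split.
Qed.

Lemma empty_slice l n (A : {set 'I_l * 'I_n}) j :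
  (A :&: block n j == set0) = (#|[set x | (j,x) \in A]| == 0%N).
Proof. by rewrite -cards_eq0 card_slice. Qed.

Definition res l' n (i : 'I_l'.+1) (S : {set 'I_l'.+1 * 'I_n}) : {set 'I_l' * 'I_n} :=
  [set y | (lift i y.1, y.2) \in S].

Lemma balanced_res l' n k (i : 'I_l'.+1) (S : {set 'I_l'.+1 * 'I_n}) :
  balanced k S -> balanced k (res i S).
Proof.
move/forallP=> H; apply/forallP=> j; rewrite card_slice.
have := H (lift i j); rewrite card_slice.
suff -> : [set x | (j, x) \in res i S] = [set x | (lift i j, x) \in S] by [].
by apply/setP=> x; rewrite /res !inE.
Qed.

Lemma ndisj_res l' n i (x : 'I_n) (S T : {set 'I_l'.+1 * 'I_n}) :
  (i, x) \in S -> (i, x) \in T -> ndisj (res i S) (res i T) = ndisj S T.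
Proof.
move=> HS HT; rewrite /ndisj -(card_imset _ (@lift_inj _ i)).
apply: eq_card => j; rewrite inE.
have E : forall j', (res i S :&: res i T :&: block n j' == set0) =
   (S :&: T :&: block n (lift i j') == set0).
  move=> j'; rewrite !empty_slice.
  suff -> : [set z | (j', z) \in res i S :&: res i T] =
            [set z | (lift i j', z) \in S :&: T] by [].
  by apply/setP=> z; rewrite /res !inE.
case: (unliftP i j) => [j'|] ->.
- by rewrite mem_imset ?inE ?E //; exact: lift_inj.
- have H0 : (S :&: T :&: block n i == set0) = false.
    by apply/negbTE/set0Pn; exists (i, x); rewrite !inE HS HT /=.
  rewrite H0; apply/negbTE/imsetP => -[j' _ /eqP].
  by rewrite (negbTE (neq_lift _ _)).
Qed.

Lemma key l' n k (F : {set {set 'I_l'.+1 * 'I_n}}) (y : 'I_l'.+1 * 'I_n) :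
  (0 < k)%N -> good_family k F -> (#|[set S in F | y \in S]| <= f l' n k)%N.
Proof.
case: y => i x kp /andP[/forall_inP bF /forall_inP dF].
set Fx := [set S in F | (i, x) \in S].
have inj : {in Fx &, injective (res i)}.
  move=> S T; rewrite !inE => /andP[SF HS] /andP[TF HT] E.
  apply/eqP; apply/negPn/negP => neq.
  have := implyP (forall_inP (dF S SF) T TF) neq.
  rewrite -(ndisj_res HS HT) E.
  have bT := balanced_res i (bF T TF).
  suff -> : ndisj (res i T) (res i T) = 0%N by [].
  rewrite /ndisj; apply/eqP; rewrite cards_eq0; apply/eqP/setP => j.
  rewrite !inE setIid empty_slice -card_slice (eqP (forallP bT j)).
  by rewrite eqn0Ngt kp.
have gG : good_family k (res i @: Fx).
  apply/andP; split.
    apply/forall_inP => U /imsetP [S]; rewrite inE => /andP[SF _] ->.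
    exact: balanced_res (bF S SF).
  apply/forall_inP => U /imsetP [S HS ->]; apply/forall_inP => V /imsetP [T HT ->].
  apply/implyP => neq.
  move: HS HT; rewrite !inE => /andP[SF HS] /andP[TF HT].
  rewrite (ndisj_res HS HT).
  have neqST : S != T by apply: contraNneq neq => ->.
  exact: (implyP (forall_inP (dF S SF) T TF) neqST).
rewrite -(card_in_imset inj) /f.
exact: (leq_bigmax_cond _ gG).
Qed.

Lemma card_cover (I T : finType) (P : pred I) (G : I -> {set T}) (A : {set T}) :
  (forall t, t \in A -> exists2 i, P i & t \in G i) ->
  (#|A| <= \sum_(i | P i) #|G i|)%N.
Proof.
move=> H; apply: (leq_trans (subset_leq_card (_ : A \subset \bigcup_(i | P i) G i))).
  by apply/subsetP => t /H [i Pi Gi]; apply/bigcupP; exists i.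
elim/big_rec2: _ => [|i B s _ IH]; first by rewrite cards0.
by rewrite (leq_trans (leq_card_setU _ _)) // leq_add2l.
Qed.

Lemma card_sumb (T : finType) (P : pred T) : #|[set x | P x]| = (\sum_x (P x : nat))%N.
Proof.
rewrite -sum1_card big_mkcond /=; apply: eq_bigr => x _; rewrite inE; by case: (P x).
Qed.

Lemma card_sum_in (T : finType) (F : {set T}) (Q : pred T) :
  #|[set S in F | Q S]| = (\sum_(S in F) (Q S : nat))%N.
Proof. rewrite card_sumb [RHS]big_mkcond; apply: eq_bigr => S _; by case: (S \in F). Qed.

Lemma card_balanced l n k (S : {set 'I_l * 'I_n}) : balanced k S -> #|S| = (l * k)%N.
Proof.
move/forallP=> H.
have -> : #|S| = (\sum_(i < l) \sum_(x < n) (((i,x) \in S) : nat))%N.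
  rewrite (pair_big predT predT (fun i x => ((i,x) \in S) : nat)) /=.
  rewrite -sum1_card big_mkcond; apply: eq_bigr => -[a b] _ /=; by case: ((a,b) \in S).
rewrite (eq_bigr (fun _ => k)).
  by rewrite big_const_ord iter_addn_0 mulnC.
move=> i _; rewrite -card_sumb -card_slice; exact/eqP/H.
Qed.

Lemma exists_bal l n k : (k <= n)%N -> balanced k [set y : 'I_l * 'I_n | (y.2 < k)%N].
Proof.
move=> kn; apply/forallP => j; rewrite card_slice.
have -> : [set x | (j,x) \in [set y : 'I_l * 'I_n | (y.2 < k)%N]] =
          [set widen_ord kn z | z : 'I_k].
  apply/setP => x; rewrite !inE /=; apply/idP/imsetP.
  - by move=> xk; exists (Ordinal xk) => //; apply: val_inj.
  - by case=> z _ ->; rewrite /= ltn_ord.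
by rewrite card_imset ?card_ord //; by move=> a b /(congr1 val) /= /val_inj.
Qed.

Lemma fpos l n k : (k <= n)%N -> (1 <= f l n k)%N.
Proof.
move=> kn.
have g : good_family k [set [set y : 'I_l * 'I_n | (y.2 < k)%N]].
  apply/andP; split; apply/forall_inP => S; rewrite inE => /eqP ->.
    exact: exists_bal.
  by apply/forall_inP => T; rewrite inE => /eqP ->; rewrite eqxx.
by have := leq_bigmax_cond (F := fun F : {set {set 'I_l * 'I_n}} => #|F|) _ g; rewrite cards1.
Qed.

Local Open Scope ring_scope.

Theorem mainTheorem12 (l k n : nat) :
  (2 <= l)%N -> (1 <= k)%N -> (1 <= n)%N ->
  ((f l n k)%:R <= (n%:R / k%:R) * (f l.-1 n k)%:R :> rat) /\
  (~~ odd l -> (k <= n)%N ->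
     ((f l n k)%:R <= 1 + (k * l)%:R * ((f l.-1 n k)%:R - 1) :> rat) /\
     (1 + (k * l)%:R * ((f l.-1 n k)%:R - 1) <= (k * l)%:R * (f l.-1 n k)%:R :> rat)).
Proof.
move=> l2 k1 n1; case: l l2 => [|l'] // l2 /=.
have pos : (0 < #|[pred F : {set {set 'I_l'.+1 * 'I_n}} | good_family k F]|)%N.
  by apply/card_gt0P; exists set0; rewrite inE; apply/andP; split; apply/forall_inP => ?; rewrite inE.
have [F gF fE] := eq_bigmax_cond (fun F : {set {set 'I_l'.+1 * 'I_n}} => #|F|) pos.
rewrite inE in gF; change (f l'.+1 n k = #|F|) in fE.
have gF' := gF; move/andP: gF' => [/forall_inP bF /forall_inP dF].
split.
  have claim : (k * #|F| <= n * f l' n k)%N.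
    have -> : (k * #|F| = \sum_(x < n) #|[set S in F | (ord0, x) \in S]|)%N.
      under eq_bigr => x _ do rewrite card_sum_in.
      rewrite exchange_big /= mulnC -sum_nat_const; apply: eq_bigr => S SF.
      rewrite -card_sumb -card_slice; exact/esym/eqP/(forallP (bF S SF)).
    apply: (@leq_trans (\sum_(x < n) f l' n k)%N).
      by apply: leq_sum => x _; exact: key.
    by rewrite big_const_ord iter_addn_0 mulnC.
  rewrite fE mulrAC ler_pdivlMr ?ltr0n // -!natrM ler_nat mulnC.
  exact: claim.
move=> ev kn.
have fp := fpos l' kn.
have claim : (#|F| <= 1 + k * l'.+1 * (f l' n k - 1))%N.
  case: (set_0Vmem F) => [->|[S0 S0F]]; first by rewrite cards0.
  rewrite (cardsD1 S0 F) S0F add1n ltnS.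
  apply: (leq_trans (card_cover (P := mem S0)
          (G := fun y => [set S in F | y \in S] :\ S0) _)).
    move=> T; rewrite !inE => /andP[neq TF].
    have od : odd (ndisj S0 T) by apply: (implyP (forall_inP (dF S0 S0F) T TF)); rewrite eq_sym.
    have [i Hi] : exists i, ~~ (S0 :&: T :&: block n i == set0).
      apply/existsP; rewrite -negb_forall; apply/negP => /forallP H.
      move: od; rewrite /ndisj.
      have -> : [set i | S0 :&: T :&: block n i == set0] = setT.
        by apply/setP => i; rewrite !inE H.
      by rewrite cardsT card_ord /= (negPn ev).
    case/set0Pn: Hi => y; rewrite !inE => /andP[/andP[yS0 yT] _].
    by exists y => //; rewrite !inE neq TF yT.
  apply: (@leq_trans (\sum_(y in S0) (f l' n k - 1))%N).
    apply: leq_sum => y yS0; have := key y k1 gF.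
    rewrite (cardsD1 S0 [set S in F | y \in S]) inE S0F (yS0 : y \in S0) /= => H.
    by rewrite leq_subRL.
  by rewrite sum_nat_const (card_balanced (bF S0 S0F)) (mulnC k).
split.
  rewrite fE; apply: (le_trans (_ : _ <= (1 + k * l'.+1 * (f l' n k - 1))%N%:R)).
    by rewrite ler_nat.
  by rewrite natrD natrM natrB // mulr1n.
have : 1 <= (k * l'.+1)%:R :> rat by rewrite ler1n muln_gt0 k1.
set a := (k * l'.+1)%:R; set b := (f l' n k)%:R.
move=> H; lra.
Qed.
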